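(* Let $F$ be a group and $K,M$ normal subgroups of $F$ with $K\geqslant M$. Assume that (1) $\mathrm{H}^2(F)=0$; (2) $F/M$ is boundedly $3$-acyclic; and (3) $K/M$ is boundedly $2$-acyclic. Then $\mathcal{W}(F,K,M)=0$ and $\mathrm{H}^1(M)^F\cap i^*\mathrm{Q}(K)^F=i^*\mathrm{H}^1(K)^F$, where $i\colon M\hookrightarrow K$ is the inclusion.
   Context: Cohomology has trivial real coefficients. A group $\Lambda$ is boundedly $n$-acyclic if its bounded cohomology $\mathrm{H}^k_b(\Lambda)$ vanishes for $1\le k\le n$. $\mathrm{Q}(K)^F$: homogeneous quasimorphisms on $K$ invariant under conjugation by $F$; $\mathrm{H}^1(M)^F$, $\mathrm{H}^1(K)^F$: $F$-invariant homomorphisms to $\mathbb{R}$; $i^*$ is restriction to $M$; $\mathcal{W}(F,K,M)=\mathrm{Q}(M)^F/(\mathrm{H}^1(M)^F+i^*\mathrm{Q}(K)^F)$. *)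

(* Defs.v *)
From HB Require Import structures.
From mathcomp Require Import all_boot all_order all_algebra.
From Stdlib Require Rdefinitions.
From mathcomp Require Import Rstruct.
Notation R := Rdefinitions.R.
Set Implicit Arguments. Unset Strict Implicit. Unset Printing Implicit Defensive.
Import Order.TTheory GRing.Theory Num.Theory.
Local Open Scope ring_scope.

Record Grp := {
  gcar :> Type;
  gmul : gcar -> gcar -> gcar;
  ginv : gcar -> gcar;
  gone : gcar;
  gmulA : forall x y z, gmul x (gmul y z) = gmul (gmul x y) z;
  gmul1 : forall x, gmul gone x = x;
  gmulV : forall x, gmul (ginv x) x = gone
}.

Section Groups.
Variable G : Grp.
Local Notation "x ** y" := (gmul x y) (at level 40, left associativity).

Definition is_subgroup (H : G -> Prop) : Prop :=
  [/\ H (gone G), (forall x y, H x -> H y -> H (x ** y)) & (forall x, H x -> H (ginv x))].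

Definition is_normal (H : G -> Prop) : Prop :=
  is_subgroup H /\ forall g x, H x -> H (g ** x ** ginv g).

Definition gpown (x : G) (n : nat) : G := iter n (gmul x) (gone G).
Definition gpow (x : G) (n : int) : G :=
  match n with Posz k => gpown x k | Negz k => ginv (gpown x k.+1) end.

(* Homogeneous standard cochain complex of G with trivial real coefficients:
   a k-cochain is a function G^(k+1) -> R, cochains are required to be
   G-invariant (diagonal left action). *)
Definition cochain (k : nat) := ('I_k.+1 -> G) -> R.

Definition face k (i : 'I_k.+2) (x : 'I_k.+2 -> G) : 'I_k.+1 -> G :=
  fun j => x (lift i j).

Definition cobound k (f : cochain k) : cochain k.+1 :=
  fun x => \sum_(i < k.+2) (-1) ^+ i * f (face i x).

Definition invariant k (f : cochain k) : Prop :=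
  forall g x, f (fun j => g ** x j) = f x.

Definition bounded k (f : cochain k) : Prop :=
  exists C : R, forall x, `|f x| <= C.

(* H^(n+1)(G; R) = 0 *)
Definition H_vanishes (n : nat) : Prop :=
  forall f : cochain n.+1, invariant f -> (forall x, cobound f x = 0) ->
  exists h : cochain n, invariant h /\ forall x, f x = cobound h x.

(* H_b^(n+1)(G; R) = 0 *)
Definition Hb_vanishes (n : nat) : Prop :=
  forall f : cochain n.+1, invariant f -> bounded f ->
  (forall x, cobound f x = 0) ->
  exists h : cochain n, invariant h /\ bounded h /\ forall x, f x = cobound h x.

(* boundedly n-acyclic: H_b^k(G) = 0 for 1 <= k <= n *)
Definition bdd_acyclic (n : nat) : Prop :=
  forall k : nat, (k < n)%N -> Hb_vanishes k.

(* Real-valued functions on a subgroup H of G are represented by functions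
   G -> R, only the values on H mattering. *)
Definition quasimorphism_on (H : G -> Prop) (f : G -> R) : Prop :=
  exists D : R, forall x y, H x -> H y -> `|f (x ** y) - f x - f y| <= D.

Definition homogeneous_on (H : G -> Prop) (f : G -> R) : Prop :=
  forall x (n : int), H x -> f (gpow x n) = n%:~R * f x.

Definition homomorphism_on (H : G -> Prop) (f : G -> R) : Prop :=
  forall x y, H x -> H y -> f (x ** y) = f x + f y.

Definition conj_invariant_on (H : G -> Prop) (f : G -> R) : Prop :=
  forall g x, H x -> f (g ** x ** ginv g) = f x.

Definition QInv (H : G -> Prop) (f : G -> R) : Prop :=
  [/\ quasimorphism_on H f, homogeneous_on H f & conj_invariant_on H f].

Definition H1Inv (H : G -> Prop) (f : G -> R) : Prop :=
  homomorphism_on H f /\ conj_invariant_on H f.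

(* W(G,K,M) = Q(M)^G / (H^1(M)^G + i^* Q(K)^G) vanishes *)
Definition W_trivial (K M : G -> Prop) : Prop :=
  forall phi, QInv M phi ->
  exists h psi, [/\ H1Inv M h, QInv K psi & forall x, M x -> phi x = h x + psi x].

End Groups.

(* Q together with pi is (a copy of) the quotient group G/N:
   pi is a surjective homomorphism G -> Q with kernel N. *)
Definition is_quotient (G Q : Grp) (N : G -> Prop) (pi : G -> Q) : Prop :=
  [/\ forall x y, pi (gmul x y) = gmul (pi x) (pi y),
      forall q, exists x, pi x = q
    & forall x, pi x = gone Q <-> N x].

(* Q together with pi is (a copy of) the quotient group H/N, for N <= H <= G:
   pi restricted to H is a surjective homomorphism H -> Q with kernel N. *)
Definition is_quotient_in (G Q : Grp) (H N : G -> Prop) (pi : G -> Q) : Prop :=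
  [/\ forall x y, H x -> H y -> pi (gmul x y) = gmul (pi x) (pi y),
      forall q, exists x, H x /\ pi x = q
    & forall x, H x -> (pi x = gone Q <-> N x)].

(* Main.v *)
Require Import Defs.
From mathcomp Require Import all_boot all_order all_algebra.
From mathcomp Require Import Rstruct.
From mathcomp Require Import ring lra.
From Stdlib Require Import FunctionalExtensionality ClassicalEpsilon.
From Stdlib Require Raxioms.
Set Implicit Arguments. Unset Strict Implicit. Unset Printing Implicit Defensive.
Import Order.TTheory GRing.Theory Num.Theory.
Local Open Scope ring_scope.
Local Notation "x ** y" := (gmul x y) (at level 40, left associativity).


Lemma mulgV (G : Grp) (x : G) : x ** ginv x = gone G.
Proof.
have e : ginv (ginv x) ** ((ginv x ** x) ** ginv x) = gone G.
  by rewrite gmulV gmul1 gmulV.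
by rewrite -gmulA gmulA gmulV gmul1 in e.
Qed.

Lemma mulg1 (G : Grp) (x : G) : x ** gone G = x.
Proof. by rewrite -(gmulV x) gmulA mulgV gmul1. Qed.

Lemma mulKg (G : Grp) (x y : G) : ginv x ** (x ** y) = y.
Proof. by rewrite gmulA gmulV gmul1. Qed.

Lemma mulKVg (G : Grp) (x y : G) : x ** (ginv x ** y) = y.
Proof. by rewrite gmulA mulgV gmul1. Qed.

Lemma mulgK (G : Grp) (x y : G) : (y ** x) ** ginv x = y.
Proof. by rewrite -gmulA mulgV mulg1. Qed.

Lemma mulgKV (G : Grp) (x y : G) : (y ** ginv x) ** x = y.
Proof. by rewrite -gmulA gmulV mulg1. Qed.

Lemma inv_uniq (G : Grp) (x y : G) : x ** y = gone G -> y = ginv x.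
Proof. by move=> e; rewrite -(mulKg x y) e mulg1. Qed.

Lemma invgK (G : Grp) (x : G) : ginv (ginv x) = x.
Proof. by symmetry; apply: inv_uniq; rewrite gmulV. Qed.

Lemma invg1 (G : Grp) : ginv (gone G) = gone G.
Proof. by symmetry; apply: inv_uniq; rewrite gmul1. Qed.

Lemma invMg (G : Grp) (x y : G) : ginv (x ** y) = ginv y ** ginv x.
Proof. by symmetry; apply: inv_uniq; rewrite -gmulA mulKVg mulgV. Qed.

Lemma gpownS (G : Grp) (x : G) n : gpown x n.+1 = x ** gpown x n.
Proof. by []. Qed.

Lemma gpown0 (G : Grp) (x : G) : gpown x 0 = gone G.
Proof. by []. Qed.

Lemma gpown1 (G : Grp) (x : G) : gpown x 1 = x.
Proof. by rewrite gpownS gpown0 mulg1. Qed.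

Lemma gpownD (G : Grp) (x : G) m n : gpown x (m + n) = gpown x m ** gpown x n.
Proof.
elim: m => [|m IH]; first by rewrite add0n gpown0 gmul1.
by rewrite addSn !gpownS IH gmulA.
Qed.

Lemma gpownSr (G : Grp) (x : G) n : gpown x n.+1 = gpown x n ** x.
Proof. by rewrite -addn1 gpownD gpown1. Qed.

Lemma gpownM (G : Grp) (x : G) m n : gpown x (m * n) = gpown (gpown x m) n.
Proof.
elim: n => [|n IH]; first by rewrite muln0.
by rewrite mulnS gpownD IH gpownS.
Qed.

Lemma gpown_one (G : Grp) n : gpown (gone G) n = gone G.
Proof. by elim: n => // n IH; rewrite gpownS IH gmul1. Qed.

Lemma gpownV (G : Grp) (x : G) n : gpown (ginv x) n = ginv (gpown x n).
Proof.
elim: n => [|n IH]; first by rewrite invg1.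
by rewrite gpownS IH gpownSr invMg.
Qed.

Lemma gpown_conj (G : Grp) (g x : G) n :
  gpown (g ** x ** ginv g) n = g ** gpown x n ** ginv g.
Proof.
elim: n => [|n IH]; first by rewrite gpown0 mulg1 mulgV.
rewrite gpownS IH gpownS.
by rewrite -!gmulA mulKg.
Qed.

Lemma sub_pown (G : Grp) (H : G -> Prop) x n :
  is_subgroup H -> H x -> H (gpown x n).
Proof.
case=> h1 hM hV hx; elim: n => [|n IH] //. by rewrite gpownS; exact: hM hx IH.
Qed.

Lemma sub_pow (G : Grp) (H : G -> Prop) x z :
  is_subgroup H -> H x -> H (gpow x z).
Proof.
move=> hH hx; case: z => n /=; first exact: sub_pown.
have [_ _ hV] := hH; rewrite -gpownS; exact: hV _ (sub_pown _ hH hx).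
Qed.

Lemma hom1 (G Q : Grp) (pi : G -> Q) :
  (forall x y, pi (x ** y) = pi x ** pi y) -> pi (gone G) = gone Q.
Proof.
move=> h. have e := h (gone G) (gone G). rewrite gmul1 in e.
by rewrite -(mulKg (pi (gone G)) (pi (gone G))) -e gmulV.
Qed.

Lemma homV (G Q : Grp) (pi : G -> Q) :
  (forall x y, pi (x ** y) = pi x ** pi y) -> forall x, pi (ginv x) = ginv (pi x).
Proof.
move=> h x; apply: inv_uniq. by rewrite -h mulgV (hom1 h).
Qed.


Definition Lf (G : Grp) n (l : seq G) : 'I_n -> G := fun j => nth (gone G) l j.
Arguments Lf [G] n l _.

Definition del (G : Grp) k (i : nat) (l : seq G) : seq G :=
  mkseq (fun j => nth (gone G) l (bump i j)) k.

Lemma face_L (G : Grp) k (i : 'I_k.+2) (l : seq G) :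
  face i (Lf k.+2 l) = Lf k.+1 (del k.+1 i l).
Proof.
apply: functional_extensionality => j.
by rewrite /face /Lf /del nth_mkseq.
Qed.

Lemma L2 (G : Grp) (x : 'I_2 -> G) : exists a b, x = Lf 2 [:: a; b].
Proof.
exists (x ord0), (x (lift ord0 ord0)); apply: functional_extensionality => j.
by case: j => [[|[|?]] Hj] //=; congr x; apply: val_inj.
Qed.

Lemma L3 (G : Grp) (x : 'I_3 -> G) : exists a b c, x = Lf 3 [:: a; b; c].
Proof.
exists (x ord0), (x (inord 1)), (x (inord 2)); apply: functional_extensionality => j.
by case: j => [[|[|[|?]]] Hj] //=; congr x; apply: val_inj; rewrite /= ?inordK.
Qed.

Lemma L4 (G : Grp) (x : 'I_4 -> G) : exists a b c d, x = Lf 4 [:: a; b; c; d].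
Proof.
exists (x ord0), (x (inord 1)), (x (inord 2)), (x (inord 3)).
apply: functional_extensionality => j.
by case: j => [[|[|[|[|?]]]] Hj] //=; congr x; apply: val_inj; rewrite /= ?inordK.
Qed.

Lemma L5 (G : Grp) (x : 'I_5 -> G) : exists a b c d e, x = Lf 5 [:: a; b; c; d; e].
Proof.
exists (x ord0), (x (inord 1)), (x (inord 2)), (x (inord 3)), (x (inord 4)).
apply: functional_extensionality => j.
by case: j => [[|[|[|[|[|?]]]]] Hj] //=; congr x; apply: val_inj; rewrite /= ?inordK.
Qed.

Lemma L_map (G Q : Grp) (pi : G -> Q) n (l : seq G) :
  pi (gone G) = gone Q ->
  (fun j => pi (Lf n l j)) = Lf n (map pi l).
Proof.
move=> h1; apply: functional_extensionality => j; rewrite /Lf.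
case: (ltnP j (size l)) => hj; first by rewrite (nth_map (gone G)).
by rewrite !nth_default ?size_map.
Qed.

Lemma L_mul (G : Grp) (g : G) n (l : seq G) :
  (size l = n)%N ->
  (fun j => g ** Lf n l j) = Lf n (map (gmul g) l).
Proof.
move=> hs; apply: functional_extensionality => j; rewrite /Lf.
by rewrite (nth_map (gone G)) // hs.
Qed.

Lemma cobound_L1 (G : Grp) (f : cochain G 1) a b c :
  cobound f (Lf 3 [:: a; b; c]) = f (Lf 2 [:: b; c]) - f (Lf 2 [:: a; c]) + f (Lf 2 [:: a; b]).
Proof.
rewrite /cobound !big_ord_recl big_ord0 !face_L /del /mkseq /bump /=.
ring.
Qed.

Lemma cobound_L2 (G : Grp) (f : cochain G 2) a b c d :
  cobound f (Lf 4 [:: a; b; c; d]) = f (Lf 3 [:: b; c; d]) - f (Lf 3 [:: a; c; d])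
     + f (Lf 3 [:: a; b; d]) - f (Lf 3 [:: a; b; c]).
Proof.
rewrite /cobound !big_ord_recl big_ord0 !face_L /del /mkseq /bump /=.
ring.
Qed.

Lemma cobound_L0 (G : Grp) (f : cochain G 0) a b :
  cobound f (Lf 2 [:: a; b]) = f (Lf 1 [:: b]) - f (Lf 1 [:: a]).
Proof.
rewrite /cobound !big_ord_recl big_ord0 !face_L /del /mkseq /bump /=.
ring.
Qed.

Lemma dd1 (G : Grp) (f : cochain G 1) x : cobound (cobound f) x = 0.
Proof.
have [a [b [c [d ->]]]] := L4 x.
rewrite /cobound !big_ord_recl !big_ord0 !face_L /del /mkseq /bump /=.
ring.
Qed.

Lemma dd2 (G : Grp) (f : cochain G 2) x : cobound (cobound f) x = 0.
Proof.
have [a [b [c [d [e ->]]]]] := L5 x.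
rewrite /cobound !big_ord_recl !big_ord0 !face_L /del /mkseq /bump /=.
ring.
Qed.


Lemma cobound_add (G : Grp) k (f g : cochain G k) x :
  cobound (fun y => f y + g y) x = cobound f x + cobound g x.
Proof. by rewrite /cobound -big_split /=; apply: eq_bigr => i _; rewrite mulrDr. Qed.

Lemma cobound_sub (G : Grp) k (f g : cochain G k) x :
  cobound (fun y => f y - g y) x = cobound f x - cobound g x.
Proof.
rewrite /cobound -sumrB /=; apply: eq_bigr => i _; by rewrite mulrBr.
Qed.

Lemma cobound_comp (G Q : Grp) (pi : G -> Q) k (f : cochain Q k) (x : 'I_k.+2 -> G) :
  cobound (fun y : 'I_k.+1 -> G => f (fun j => pi (y j))) x = cobound f (fun j => pi (x j)).
Proof. by []. Qed.

Lemma cobound_inv (G : Grp) k (f : cochain G k) : Defs.invariant f -> Defs.invariant (cobound f).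
Proof.
rewrite /Defs.invariant => hf g x; rewrite /cobound; apply: eq_bigr => i _.
congr (_ * _); exact: (hf g (face i x)).
Qed.

Lemma cobound_bound (G : Grp) k (f : cochain G k) C :
  (forall y, `|f y| <= C) -> forall x, `|cobound f x| <= k.+2%:R * C.
Proof.
move=> hC x; rewrite /cobound.
apply: le_trans (ler_norm_sum _ _ _) _.
have -> : k.+2%:R * C = \sum_(i < k.+2) C by rewrite sumr_const card_ord mulr_natl.
apply: ler_sum => i _; rewrite normrM normrX normrN1 expr1n mul1r; exact: hC.
Qed.

Lemma cobound_ext (G : Grp) k (f g : cochain G k) x :
  (forall y, f y = g y) -> cobound f x = cobound g x.
Proof. by move=> h; rewrite /cobound; apply: eq_bigr => i _; rewrite h. Qed.


Lemma zero_of_bound (r C : R) : (forall n : nat, n.+1%:R * `|r| <= C) -> r = 0.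
Proof.
move=> h; apply/eqP; apply/negPn/negP => hr.
have hr0 : 0 < `|r| by rewrite normr_gt0.
have h0 := h 0%N; rewrite mul1r in h0.
have hC : 0 <= C / `|r| by apply: divr_ge0 => //; apply: le_trans h0.
have := archi_boundP hC; set n := Num.Def.archi_bound _ => hn.
have := h n.
have : n%:R * `|r| <= n.+1%:R * `|r|.
  by apply: ler_wpM2r; [exact: ltW | rewrite ler_nat].
move: hn; rewrite ltr_pdivrMr // => hn.
lra.
Qed.

Lemma normle (x y : R) : (`|x| <= y) <-> (- y <= x /\ x <= y).
Proof. by rewrite ler_norml; split => [/andP|[-> ->]]. Qed.

Lemma qm_pow (G : Grp) (Psi : G -> R) (D : R) :
  (forall a b, `|Psi a + Psi b - Psi (a ** b)| <= D) ->
  forall y k, `|Psi (gpown y k.+1) - k.+1%:R * Psi y| <= k%:R * D.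
Proof.
move=> hD y; elim=> [|k IH]; first by rewrite gpown1 mul1r subrr normr0 mul0r.
have := hD y (gpown y k.+1); rewrite -gpownS.
move/normle => [h1 h2]; move/normle: IH => [h3 h4].
apply/normle.
rewrite [k.+2%:R]mulrS [k.+1%:R]mulrS.
rewrite [k.+1%:R]mulrS in h3 h4.
lra.
Qed.

Lemma homog_exists (G : Grp) (Psi : G -> R) (D : R) :
  (forall a b, `|Psi a + Psi b - Psi (a ** b)| <= D) ->
  forall x : G, exists L : R, forall n, `|n.+1%:R * L - Psi (gpown x n.+1)| <= D.
Proof.
move=> hD x.
have D0 : 0 <= D by apply: le_trans (hD x x); exact: normr_ge0.
set u := fun n => Psi (gpown x n).
have key : forall n m, (u n.+1 - D) / n.+1%:R <= (u m.+1 + D) / m.+1%:R.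
  move=> n m.
  have A := qm_pow hD (gpown x n.+1) m.
  have B := qm_pow hD (gpown x m.+1) n.
  rewrite -!gpownM mulnC in A B.
  rewrite ler_pdivrMr ?ltr0Sn // mulrAC ler_pdivlMr ?ltr0Sn //.
  move/normle: A => [a1 a2]; move/normle: B => [b1 b2].
  rewrite /u.
  rewrite [n.+1%:R]mulrS [m.+1%:R]mulrS in a1 a2 b1 b2 *.
  nra.
pose E := fun r : R => exists n, r = (u n.+1 - D) / n.+1%:R.
have hb : Raxioms.bound E.
  exists ((u 1%N + D) / 1%:R) => r [n ->]; apply/RleP; exact: key.
have hne : exists r, E r by exists ((u 1%N - D) / 1%:R); exists 0%N.
have [L [hub hlub]] := Raxioms.completeness E hb hne.
exists L => n.
have h1 : (u n.+1 - D) / n.+1%:R <= L by apply/RleP; apply: hub; exists n.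
have h2 : L <= (u n.+1 + D) / n.+1%:R.
  apply/RleP; apply: hlub => r [m ->]; apply/RleP; exact: key.
rewrite ler_pdivrMr ?ltr0Sn // in h1.
rewrite ler_pdivlMr ?ltr0Sn // in h2.
apply/normle; rewrite /u in h1 h2; lra.
Qed.

Lemma homogenize (G : Grp) (Psi : G -> R) (D : R) :
  (forall a b, `|Psi a + Psi b - Psi (a ** b)| <= D) ->
  exists Ph : G -> R, forall x n, `|n.+1%:R * Ph x - Psi (gpown x n.+1)| <= D.
Proof.
move=> hD.
exists (fun x => proj1_sig (constructive_indefinite_description _ (homog_exists hD x))).
move=> x n; exact: (proj2_sig (constructive_indefinite_description _ (homog_exists hD x))).
Qed.


Lemma Ph_identify (G : Grp) (Psi Ph : G -> R) (D : R)
  (hPh : forall x n, `|n.+1%:R * Ph x - Psi (gpown x n.+1)| <= D)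
  (x : G) (c C : R) :
  (forall n, `|n.+1%:R * c - Psi (gpown x n.+1)| <= C) -> Ph x = c.
Proof.
move=> hc; apply/eqP; rewrite -subr_eq0; apply/eqP.
apply: (@zero_of_bound _ (D + C)) => n.
rewrite -normr_nat -normrM mulrBr.
have -> : n.+1%:R * Ph x - n.+1%:R * c =
   (n.+1%:R * Ph x - Psi (gpown x n.+1)) - (n.+1%:R * c - Psi (gpown x n.+1)) by ring.
apply: le_trans (ler_normB _ _) _.
exact: lerD.
Qed.

Lemma Ph_near (G : Grp) (Psi Ph : G -> R) (D : R)
  (hPh : forall x n, `|n.+1%:R * Ph x - Psi (gpown x n.+1)| <= D) x :
  `|Ph x - Psi x| <= D.
Proof. by have := hPh x 0%N; rewrite mul1r gpown1. Qed.

Lemma Ph_pown (G : Grp) (Psi Ph : G -> R) (D : R)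
  (hD : forall a b, `|Psi a + Psi b - Psi (a ** b)| <= D)
  (hPh : forall x n, `|n.+1%:R * Ph x - Psi (gpown x n.+1)| <= D) x k :
  Ph (gpown x k) = k%:R * Ph x.
Proof.
case: k => [|k].
  rewrite mul0r gpown0; apply: (Ph_identify hPh (C := D)) => n.
  rewrite mulr0 sub0r normrN gpown_one.
  by have := hD (gone G) (gone G); rewrite gmul1 addrK.
apply: (Ph_identify hPh (C := D)) => n.
rewrite -gpownM mulrA -natrM mulnC.
exact: hPh x (k.+1 * n.+1).-1.
Qed.

Lemma Ph_inv (G : Grp) (Psi Ph : G -> R) (D : R)
  (hD : forall a b, `|Psi a + Psi b - Psi (a ** b)| <= D)
  (hPh : forall x n, `|n.+1%:R * Ph x - Psi (gpown x n.+1)| <= D) x :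
  Ph (ginv x) = - Ph x.
Proof.
apply: (Ph_identify hPh (C := D + D + D)) => n.
rewrite gpownV; set y := gpown x n.+1.
have h1 := hPh x n; have h2 := hD (ginv y) y; have h3 := hD (gone G) (gone G).
rewrite gmulV in h2; rewrite gmul1 in h3.
move/normle: h1 => [a1 a2]; move/normle: h2 => [b1 b2]; move/normle: h3 => [c1 c2].
apply/normle; rewrite /y in a1 a2 b1 b2 *; lra.
Qed.

Lemma Ph_conj (G : Grp) (Psi Ph : G -> R) (D : R)
  (hD : forall a b, `|Psi a + Psi b - Psi (a ** b)| <= D)
  (hPh : forall x n, `|n.+1%:R * Ph x - Psi (gpown x n.+1)| <= D) g x :
  Ph (g ** x ** ginv g) = Ph x.
Proof.
apply: (Ph_identify hPh (C := D + D + D + `|Psi g + Psi (ginv g)|)) => n.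
rewrite gpown_conj; set y := gpown x n.+1.
have h1 := hPh x n; have h2 := hD (g ** y) (ginv g); have h3 := hD g y.
have h4 : - `|Psi g + Psi (ginv g)| <= Psi g + Psi (ginv g) <= `|Psi g + Psi (ginv g)|.
  by rewrite -ler_norml.
move/andP: h4 => [d1 d2].
move/normle: h1 => [a1 a2]; move/normle: h2 => [b1 b2]; move/normle: h3 => [c1 c2].
apply/normle; rewrite /y in a1 a2 b1 b2 c1 c2 *; lra.
Qed.

Lemma Ph_qm (G : Grp) (Psi Ph : G -> R) (D : R)
  (hD : forall a b, `|Psi a + Psi b - Psi (a ** b)| <= D)
  (hPh : forall x n, `|n.+1%:R * Ph x - Psi (gpown x n.+1)| <= D) x y :
  `|Ph (x ** y) - Ph x - Ph y| <= D + D + D + D.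
Proof.
have h1 := Ph_near hPh x; have h2 := Ph_near hPh y; have h3 := Ph_near hPh (x ** y).
have h4 := hD x y.
move/normle: h1 => [a1 a2]; move/normle: h2 => [b1 b2]; move/normle: h3 => [c1 c2].
move/normle: h4 => [d1 d2].
apply/normle; lra.
Qed.

Lemma Ph_pow (G : Grp) (Psi Ph : G -> R) (D : R)
  (hD : forall a b, `|Psi a + Psi b - Psi (a ** b)| <= D)
  (hPh : forall x n, `|n.+1%:R * Ph x - Psi (gpown x n.+1)| <= D) x z :
  Ph (gpow x z) = z%:~R * Ph x.
Proof.
case: z => n; first by rewrite /gpow (Ph_pown hD hPh).
rewrite /gpow (Ph_inv hD hPh) (Ph_pown hD hPh) NegzE.
by rewrite mulrNz mulNr.
Qed.


Lemma homog_nat (G : Grp) (H : G -> Prop) (f : G -> R) x n :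
  homogeneous_on H f -> H x -> f (gpown x n) = n%:R * f x.
Proof. by move=> hf hx; exact: (hf x (Posz n) hx). Qed.

Lemma hom_one (G : Grp) (H : G -> Prop) (f : G -> R) :
  is_subgroup H -> homomorphism_on H f -> f (gone G) = 0.
Proof.
move=> [h1 _ _] hf; have := hf _ _ h1 h1; rewrite gmul1 => e.
have : f (gone G) + f (gone G) = f (gone G) + 0 by rewrite addr0 -e.
exact: addrI.
Qed.

Lemma hom_pown (G : Grp) (H : G -> Prop) (f : G -> R) x n :
  is_subgroup H -> homomorphism_on H f -> H x -> f (gpown x n) = n%:R * f x.
Proof.
move=> hH hf hx; elim: n => [|n IH]; first by rewrite mul0r (hom_one hH hf).
rewrite gpownS hf //; last exact: sub_pown.
by rewrite IH mulrS mulrDl mul1r.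
Qed.

Lemma psi_km (F : Grp) (K M : F -> Prop) (hK : is_normal K) (hM : is_normal M)
  (hMK : forall x, M x -> K x) (psi : F -> R) :
  QInv K psi -> homomorphism_on M psi ->
  forall k m, K k -> M m -> psi (k ** m) = psi k + psi m.
Proof.
move=> [[D hD] hh hc] hom k m hk hm.
have [[M1 MM MV] Mn] := hM; have [[K1 KM KV] Kn] := hK.
have aux : forall n, exists m', [/\ M m', gpown (k ** m) n = gpown k n ** m'
                                 & psi m' = n%:R * psi m].
  elim=> [|n [m' [hm' e1 e2]]].
    exists (gone F); split => //; first by rewrite gpown0 gmul1.
    by rewrite mul0r (hom_one hM.1 hom).
  pose c := ginv (gpown k n) ** m ** gpown k n.
  have hcM : M c.
    by rewrite /c -{2}(invgK (gpown k n)); apply: Mn.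
  have hcv : psi c = psi m.
    by rewrite /c -{2}(invgK (gpown k n)); apply: hc; apply: hMK.
  exists (c ** m'); split.
  - exact: MM.
  - rewrite !gpownS e1 /c -!gmulA; congr (k ** _).
    by rewrite mulKVg.
  - by rewrite hom // hcv e2 mulrS mulrDl mul1r.
apply/eqP; rewrite -subr_eq0; apply/eqP.
apply: (@zero_of_bound _ D) => n.
have [m' [hm' e1 e2]] := aux n.+1.
have hkm : K (k ** m) by apply: KM => //; exact: hMK.
have := hD (gpown k n.+1) m' (sub_pown _ hK.1 hk) (hMK _ hm').
rewrite -e1 (homog_nat _ hh hkm) (homog_nat _ hh hk) e2.
rewrite -normr_nat -normrM.
have -> : n.+1%:R * (psi (k ** m) - (psi k + psi m)) =
   n.+1%:R * psi (k ** m) - n.+1%:R * psi k - n.+1%:R * psi m by ring.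
by rewrite normr_nat.
Qed.

Definition Dfun (G : Grp) (psi : G -> R) (a b : G) := psi a + psi b - psi (a ** b).

Definition o30 : 'I_3 := @Ordinal 3 0 isT.
Definition o31 : 'I_3 := @Ordinal 3 1 isT.
Definition o32 : 'I_3 := @Ordinal 3 2 isT.

Lemma quot_in_facts (F Q : Grp) (K N : F -> Prop) (pi : F -> Q) :
  is_subgroup K -> is_quotient_in K N pi ->
  [/\ pi (gone F) = gone Q, forall x, K x -> pi (ginv x) = ginv (pi x)
    & exists t : Q -> F, forall q, K (t q) /\ pi (t q) = q].
Proof.
move=> [K1 KM KV] [hom sur ker].
have p1 : pi (gone F) = gone Q.
  have e := hom _ _ K1 K1; rewrite gmul1 in e.
  by rewrite -(mulKg (pi (gone F)) (pi (gone F))) -e gmulV.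
split => //.
  move=> x hx; apply: inv_uniq; by rewrite -hom ?mulgV //; apply: KV.
exists (fun q => proj1_sig (constructive_indefinite_description _ (sur q))).
move=> q; exact: (proj2_sig (constructive_indefinite_description _ (sur q))).
Qed.

Lemma part2 (F : Grp) (K M : F -> Prop) (hK : is_normal K) (hM : is_normal M)
  (hMK : forall x, M x -> K x)
  (KM : Grp) (piKM : F -> KM) (hKM : is_quotient_in K M piKM)
  (h3 : bdd_acyclic KM 2) (psi : F -> R) :
  QInv K psi -> homomorphism_on M psi -> homomorphism_on K psi.
Proof.
move=> hq hom.
have km := psi_km hK hM hMK hq hom.
have [[D hD] hh hc] := hq.
have [[M1 MM MV] Mn] := hM; have [[K1 KMul KV] Kn] := hK.
have [pihom _ piker] := hKM.
have [pi1 piV [t ht]] := quot_in_facts hK.1 hKM.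
have mk : forall k m, K k -> M m -> psi (m ** k) = psi m + psi k.
  move=> k m hk hm.
  have -> : m ** k = k ** (ginv k ** m ** ginv (ginv k)) by rewrite invgK -!gmulA mulKVg.
  rewrite km //; last exact: Mn.
  rewrite hc; [by rewrite addrC | exact: hMK].
have coset1 : forall a b m, K a -> K b -> M m -> Dfun psi (a ** m) b = Dfun psi a b.
  move=> a b m ha hb hm; rewrite /Dfun.
  have -> : a ** m ** b = (a ** b) ** (ginv b ** m ** ginv (ginv b)).
    by rewrite invgK -!gmulA mulKVg.
  rewrite km // km; [|exact: KMul|exact: Mn].
  rewrite hc; last exact: hMK.
  ring.
have coset2 : forall a b m, K a -> K b -> M m -> Dfun psi a (b ** m) = Dfun psi a b.
  move=> a b m ha hb hm.
  rewrite /Dfun gmulA km // km //; last exact: KMul.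
  ring.
have tpi : forall z, K z -> exists m, M m /\ t (piKM z) = z ** m.
  move=> z hz; exists (ginv z ** t (piKM z)); split; last by rewrite mulKVg.
  have hk : K (ginv z ** t (piKM z)) by apply: KMul; [exact: KV | exact: (ht _).1].
  apply/(piker _ hk).
  by rewrite pihom ?piV ?(ht _).2 ?gmulV //; [exact: KV | exact: (ht _).1].
have Dpi : forall z1 z2, K z1 -> K z2 ->
    Dfun psi (t (piKM z1)) (t (piKM z2)) = Dfun psi z1 z2.
  move=> z1 z2 h1 h2.
  have [m1 [hm1 ->]] := tpi z1 h1; have [m2 [hm2 ->]] := tpi z2 h2.
  rewrite coset1 //; last exact: KMul h2 (hMK _ hm2).
  by rewrite coset2.
have ta : forall q, K (t q) by move=> q; exact: (ht q).1.
pose P (x y : F) := psi (ginv x ** y).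
pose Dh : cochain KM 2 := fun y => Dfun psi (t (ginv (y o30) ** y o31)) (t (ginv (y o31) ** y o32)).
have epi : forall a b, ginv a ** b = piKM (ginv (t a) ** t b).
  move=> a b; rewrite pihom; [|exact: KV (ta a)|exact: ta b].
  by rewrite piV ?(ht a).2 ?(ht b).2 //; exact: ta a.
have Dh_eval : forall a b c, Dh (Lf 3 [:: a; b; c]) = P (t a) (t b) + P (t b) (t c) - P (t a) (t c).
  move=> a b c.
  have -> : Dh (Lf 3 [:: a; b; c]) = Dfun psi (t (ginv a ** b)) (t (ginv b ** c)) by [].
  rewrite (epi a b) (epi b c) Dpi; last first.
  - exact: KMul (KV _ (ta _)) (ta _).
  - exact: KMul (KV _ (ta _)) (ta _).
  by rewrite /Dfun /P -gmulA mulKVg.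
have Dh_inv : Defs.invariant Dh.
  move=> g y; rewrite /Dh !invMg -!gmulA !mulKg; done.
have Dh_bnd : bounded Dh.
  exists D => y; rewrite /Dh /Dfun.
  set a := t _; set b := t _.
  have := hD a b (ta _) (ta _).
  by rewrite -normrN; congr (_ <= _); congr `|_|; ring.
have Dh_coc : forall y, cobound Dh y = 0.
  move=> y; have [a [b [c [d ->]]]] := L4 y.
  rewrite cobound_L2 !Dh_eval; ring.
have [B [Binv [[CB hCB] hB]]] := h3 1%N isT Dh Dh_inv Dh_bnd Dh_coc.
pose beta (q : KM) := B (Lf 2 [:: gone KM; q]).
have B_eval : forall x0 x1, B (Lf 2 [:: x0; x1]) = beta (ginv x0 ** x1).
  move=> x0 x1; rewrite -(Binv (ginv x0)) L_mul //= gmulV //.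
have Dfun_beta : forall a b, K a -> K b ->
    Dfun psi a b = beta (piKM b) - beta (piKM (a ** b)) + beta (piKM a).
  move=> a b ha hb.
  have e1 : Dh (Lf 3 [:: gone KM; piKM a; piKM (a ** b)]) = Dfun psi a b.
    have -> : Dh (Lf 3 [:: gone KM; piKM a; piKM (a ** b)]) =
       Dfun psi (t (ginv (gone KM) ** piKM a)) (t (ginv (piKM a) ** piKM (a ** b))) by [].
    by rewrite invg1 gmul1 pihom // mulKg Dpi.
  by rewrite -e1 hB cobound_L1 !B_eval invg1 !gmul1 pihom // mulKg.
have bpow : forall x n, K x -> beta (piKM (gpown x n)) = n%:R * beta (piKM x).
  move=> x n hx.
  pose g y := psi y - beta (piKM y).
  have gh : homomorphism_on K g.
    move=> a0 b0 ha hb; have := Dfun_beta a0 b0 ha hb; rewrite /Dfun /g => e; lra.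
  have := hom_pown n hK.1 gh hx; rewrite /g (homog_nat _ hh hx).
  move=> e; lra.
have b0 : forall x, K x -> beta (piKM x) = 0.
  move=> x hx; apply: (@zero_of_bound _ CB) => n.
  rewrite -normr_nat -normrM -bpow //; exact: hCB.
move=> a b ha hb.
have := Dfun_beta a b ha hb; rewrite !b0 //; last exact: KMul.
rewrite /Dfun => e; lra.
Qed.


Definition o20 : 'I_2 := @Ordinal 2 0 isT.
Definition o21 : 'I_2 := @Ordinal 2 1 isT.

Lemma part1 (F : Grp) (K M : F -> Prop)
  (hK : is_normal K) (hM : is_normal M) (hMK : forall x, M x -> K x)
  (h1 : H_vanishes F 1)
  (FM : Grp) (piFM : F -> FM) (hFM : is_quotient M piFM)
  (h2 : bdd_acyclic FM 3) : W_trivial K M.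
Proof.
move=> phi [[D hD] hph hpc].
have [pihom sur ker] := hFM.
have pi1 := hom1 pihom; have piV := homV pihom.
have [[M1 MM MV] Mn] := hM.
have D0 : 0 <= D by apply: le_trans (hD _ _ M1 M1); exact: normr_ge0.
pose s0 q := proj1_sig (constructive_indefinite_description _ (sur q)).
have hs0 : forall q, piFM (s0 q) = q.
  move=> q; exact: (proj2_sig (constructive_indefinite_description _ (sur q))).
pose s q := if excluded_middle_informative (q = gone FM) then gone F else s0 q.
have hs : forall q, piFM (s q) = q.
  move=> q; rewrite /s; destruct (excluded_middle_informative (q = gone FM)) as [e|ne].
    by rewrite /= pi1 e. exact: hs0.
have s1 : s (gone FM) = gone F.
  rewrite /s; by destruct (excluded_middle_informative (gone FM = gone FM)).
pose Phi x := phi (x ** ginv (s (piFM x))).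
have Mmu : forall x, M (x ** ginv (s (piFM x))).
  by move=> x; apply/ker; rewrite pihom piV hs mulgV.
pose z a b := s a ** s b ** ginv (s (a ** b)).
have Mz : forall a b, M (z a b).
  by move=> a b; apply/ker; rewrite /z !pihom piV !hs mulgV.
have Phi_M : forall m, M m -> Phi m = phi m.
  by move=> m hm; rewrite /Phi (ker m).2 // s1 invg1 mulg1.
have keyb : forall x y,
    `|Phi x + Phi y - Phi (x ** y) + phi (z (piFM x) (piFM y))| <= D + D.
  move=> x y.
  set a := piFM x; set b := piFM y.
  pose m := x ** ginv (s a); pose n := y ** ginv (s b).
  pose n' := s a ** n ** ginv (s a).
  have e : (x ** y) ** ginv (s (piFM (x ** y))) = m ** (n' ** z a b).
    rewrite pihom -/a -/b /m /n' /n /z -!gmulA !mulKg; done.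
  have hm : M m by exact: Mmu.
  have hn : M n by exact: Mmu.
  have hn' : M n' by exact: Mn.
  have q1 := hD _ _ hm (MM _ _ hn' (Mz a b)).
  have q2 := hD _ _ hn' (Mz a b).
  have e2 : phi n' = phi n by rewrite /n'; apply: hpc.
  rewrite /Phi e -/a -/b -/m -/n.
  move/normle: q1 => [u1 u2]; move/normle: q2 => [v1 v2].
  apply/normle; rewrite e2 in v1 v2; lra.
have piL : forall n l, (fun j => piFM (Lf n l j)) = Lf n (map piFM l).
  by move=> n l; apply: L_map.
pose E : cochain F 1 := fun y => Phi (ginv (y o20) ** y o21).
pose A : cochain FM 2 := fun y => phi (z (ginv (y o30) ** y o31) (ginv (y o31) ** y o32)).
pose Apull : cochain F 2 := fun y => A (fun j => piFM (y j)).
pose c0 : cochain F 2 := fun y => cobound E y + Apull y.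
have E_L : forall a b, E (Lf 2 [:: a; b]) = Phi (ginv a ** b) by [].
have A_L : forall a b c, A (Lf 3 [:: a; b; c]) = phi (z (ginv a ** b) (ginv b ** c)) by [].
have c0_bnd : forall y, `|c0 y| <= D + D.
  move=> y; have [a [b [c ->]]] := L3 y.
  rewrite /c0 cobound_L1 !E_L /Apull piL /= A_L -!piV -!pihom.
  have -> : ginv a ** c = (ginv a ** b) ** (ginv b ** c) by rewrite -gmulA mulKVg.
  have := keyb (ginv a ** b) (ginv b ** c).
  congr (`|_| <= _); ring.
have Ainv : Defs.invariant A.
  by move=> g y; rewrite /A !invMg -!gmulA !mulKg.
have dA_bnd : bounded (cobound A).
  exists (4%:R * (D + D)) => y.
  have [a [b [c [d ->]]]] := L4 y.
  have -> : Lf 4 [:: a; b; c; d] = (fun j => piFM (Lf 4 [:: s a; s b; s c; s d] j)).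
    by rewrite piL /= !hs.
  rewrite -cobound_comp -/Apull.
  rewrite (@cobound_ext _ _ Apull (fun y => c0 y - cobound E y)); last first.
    by move=> y0; rewrite /c0; ring.
  rewrite cobound_sub dd1 subr0.
  exact: cobound_bound c0_bnd _.
have dA_coc : forall y, cobound (cobound A) y = 0 by move=> y; exact: dd2.
have [Bc [Bcinv [[CB hCB] hBc]]] :=
  h2 2%N isT (cobound A) (cobound_inv Ainv) dA_bnd dA_coc.
pose c1 : cochain F 2 := fun y => c0 y - Bc (fun j => piFM (y j)).
have pullinv : forall k (f : cochain FM k), Defs.invariant f ->
    forall g (y : 'I_k.+1 -> F), f (fun j => piFM (g ** y j)) = f (fun j => piFM (y j)).
  move=> k f hf g y.
  have -> : (fun j => piFM (g ** y j)) = (fun j => piFM g ** piFM (y j)).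
    by apply: functional_extensionality => j; rewrite pihom.
  exact: hf.
have Einv : Defs.invariant E.
  by move=> g y; rewrite /E invMg -!gmulA mulKg.
have c1inv : Defs.invariant c1.
  move=> g y; rewrite /c1 /c0 /Apull.
  rewrite (cobound_inv Einv) (pullinv _ _ Ainv) (pullinv _ _ Bcinv); done.
have c1bnd : bounded c1.
  exists (D + D + CB) => y; rewrite /c1.
  apply: le_trans (ler_normB _ _) _; apply: lerD => //; exact: c0_bnd.
have c1coc : forall y, cobound c1 y = 0.
  move=> y; rewrite /c1 cobound_sub /c0 cobound_add dd1 add0r.
  by rewrite /Apull !cobound_comp hBc subrr.
have [h [hinv hc1]] := h1 c1 c1inv c1coc.
pose Psi x := h (Lf 2 [:: gone F; x]).
have h_eval : forall x0 x1, h (Lf 2 [:: x0; x1]) = Psi (ginv x0 ** x1).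
  by move=> x0 x1; rewrite -(hinv (ginv x0)) L_mul //= gmulV.
have c1_eval : forall a b, c1 (Lf 3 [:: gone F; a; a ** b]) = Psi a + Psi b - Psi (a ** b).
  move=> a b; rewrite hc1 cobound_L1 !h_eval mulKg invg1 !gmul1; ring.
have [CB0 _] : 0 <= CB /\ True by split => //; apply: le_trans (hCB (Lf 3 [::])); exact: normr_ge0.
have hD2 : forall a b, `|Psi a + Psi b - Psi (a ** b)| <= D + D + CB.
  move=> a b; rewrite -c1_eval /c1.
  apply: le_trans (ler_normB _ _) _; apply: lerD => //; exact: c0_bnd.
pose kap := A (Lf 3 [:: gone FM; gone FM; gone FM]) - Bc (Lf 3 [:: gone FM; gone FM; gone FM]).
have PsiM : forall a b, M a -> M b ->
    Psi a + Psi b - Psi (a ** b) = phi a + phi b - phi (a ** b) + kap.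
  move=> a b ha hb.
  have hab : M (a ** b) by exact: MM.
  rewrite -c1_eval /c1 /c0 /Apull /= (piL 3%N [:: gone F; a; a ** b]) cobound_L1 !E_L /= mulKg invg1 !gmul1.
  rewrite pi1 (ker a).2 // (ker (a ** b)).2 // !Phi_M // /kap; ring.
pose chi m := Psi m - phi m - kap.
have chih : homomorphism_on M chi.
  move=> a b ha hb; have := PsiM a b ha hb; rewrite /chi => e; lra.
have [Ph hPh] := homogenize hD2.
have PhM : forall m, M m -> Ph m = phi m + chi m.
  move=> m hm; apply: (Ph_identify hPh (C := `|kap|)) => n.
  have e : Psi (gpown m n.+1) = phi (gpown m n.+1) + chi (gpown m n.+1) + kap.
    by rewrite /chi; ring.
  rewrite e (homog_nat _ hph hm) (hom_pown _ hM.1 chih hm).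
  have -> : n.+1%:R * (phi m + chi m) -
     (n.+1%:R * phi m + n.+1%:R * chi m + kap) = - kap by ring.
  by rewrite normrN.
exists (fun x => phi x - Ph x), Ph; split.
- split.
  + move=> a b ha hb /=.
    rewrite !PhM //; last exact: MM.
    rewrite (chih a b ha hb); ring.
  + move=> g x hx /=; rewrite hpc // (Ph_conj hD2 hPh) //.
- split.
  + exists (D + D + CB + (D + D + CB) + (D + D + CB) + (D + D + CB)) => x y _ _.
    exact: (Ph_qm hD2 hPh).
  + move=> x n _; exact: (Ph_pow hD2 hPh).
  + move=> g x _; exact: (Ph_conj hD2 hPh).
- move=> x _; ring.
Qed.


Lemma hom_QInv (F : Grp) (K : F -> Prop) (h : F -> R) :
  is_subgroup K -> homomorphism_on K h -> conj_invariant_on K h -> QInv K h.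
Proof.
move=> hK hh hc; have [K1 KM KV] := hK; split => //.
- by exists 0 => x y hx hy; rewrite hh // (_ : h x + h y - h x - h y = 0) ?normr0 //; ring.
- move=> x z hx; case: z => n.
  + exact: (hom_pown n hK hh hx).
  + rewrite /gpow NegzE mulrNz.
    have hy : K (gpown x n.+1) by exact: sub_pown.
    have e := hh _ _ (KV _ hy) hy; rewrite gmulV (hom_one hK hh) in e.
    have -> : h (ginv (gpown x n.+1)) = - h (gpown x n.+1) by lra.
    by rewrite (hom_pown _ hK hh hx) mulNr.
Qed.
Unset Implicit Arguments.
Theorem proposition7p5 (F : Grp) (K M : F -> Prop)
  (hK : is_normal K) (hM : is_normal M) (hMK : forall x, M x -> K x)
  (h1 : H_vanishes F 1)
  (FM : Grp) (piFM : F -> FM) (hFM : is_quotient M piFM)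
  (h2 : bdd_acyclic FM 3)
  (KM : Grp) (piKM : F -> KM) (hKM : is_quotient_in K M piKM)
  (h3 : bdd_acyclic KM 2) :
  W_trivial K M /\
  (forall f : F -> R,
     (H1Inv M f /\ exists psi, QInv K psi /\ forall x, M x -> f x = psi x) <->
     (exists h, H1Inv K h /\ forall x, M x -> f x = h x)).
Proof.
split; first exact: (part1 hK hM hMK h1 hFM h2).
have [[M1 MM MV] Mn] := hM.
move=> f; split.
- move=> [[fh fc] [psi [hq he]]].
  exists psi; split; last exact: he.
  split; last by case: hq.
  apply: (part2 hK hM hMK hKM h3 hq).
  move=> x y hx hy; rewrite -!he //; [exact: fh | exact: MM].
- move=> [h [[hh hc] he]]; split.
  + split.
    * move=> x y hx hy; rewrite !he //; [|exact: MM]; apply: hh; exact: hMK.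
    * move=> g x hx; rewrite !he //; [|exact: Mn]; apply: hc; exact: hMK.
  + exists h; split => //; exact: hom_QInv hK.1 hh hc.
Qed.
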